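(* Let $D$ be a connected locally finite C-homogeneous digraph. Then for every vertex $x\in VD$, neither the subdigraph induced by $N^+(x)$ nor the subdigraph induced by $N^-(x)$ is isomorphic to $H$.
   Context: A digraph has an irreflexive, antisymmetric edge relation; connectedness and local finiteness refer to the underlying undirected graph. $D$ is C-homogeneous if every isomorphism between finite connected induced subdigraphs extends to an automorphism of $D$. $N^+(x)=\{y: xy\in ED\}$, $N^-(x)=\{y: yx\in ED\}$. A digraph is homogeneous if every isomorphism between finite induced subdigraphs extends to an automorphism. By Lachlan's classification, a finite digraph is homogeneous iff it is isomorphic to the directed 4-cycle $C_4$, to $\bar K_n$ (no edges, $n$ vertices), $\bar K_n[C_3]$, $C_3[\bar K_n]$ ($n\ge 1$, lexicographic products with the directed triangle $C_3$), or to one further exceptional digraph; $H$ denotes this exceptional finite homogeneous digraph. *)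

(* Defs.v *)
From Stdlib Require Import List Relations.
Import ListNotations.

Definition is_digraph {V : Type} (E : V -> V -> Prop) : Prop :=
  (forall x, ~ E x x) /\ (forall x y, E x y -> ~ E y x).

Definition adj {V : Type} (E : V -> V -> Prop) (x y : V) : Prop := E x y \/ E y x.

Definition connected_on {V : Type} (E : V -> V -> Prop) (A : V -> Prop) : Prop :=
  forall x y, A x -> A y ->
    clos_refl_trans V (fun a b => A a /\ A b /\ adj E a b) x y.

Definition connected {V : Type} (E : V -> V -> Prop) : Prop :=
  connected_on E (fun _ => True).

Definition locally_finite {V : Type} (E : V -> V -> Prop) : Prop :=
  forall x, exists l : list V, forall y, adj E x y -> In y l.

Definition finite_set {V : Type} (A : V -> Prop) : Prop :=
  exists l : list V, forall x, A x -> In x l.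

Definition induced_iso {V : Type} (E : V -> V -> Prop) (A B : V -> Prop) (f : V -> V) : Prop :=
  (forall x, A x -> B (f x)) /\
  (forall x y, A x -> A y -> f x = f y -> x = y) /\
  (forall y, B y -> exists x, A x /\ f x = y) /\
  (forall x y, A x -> A y -> (E x y <-> E (f x) (f y))).

Definition automorphism {V : Type} (E : V -> V -> Prop) (g : V -> V) : Prop :=
  (exists h : V -> V, (forall x, h (g x) = x) /\ (forall y, g (h y) = y)) /\
  (forall x y, E x y <-> E (g x) (g y)).

Definition C_homogeneous {V : Type} (E : V -> V -> Prop) : Prop :=
  forall (A B : V -> Prop) (f : V -> V),
    finite_set A -> connected_on E A ->
    finite_set B -> connected_on E B ->
    induced_iso E A B f ->
    exists g, automorphism E g /\ (forall x, A x -> g x = f x).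

Definition out_nbhd {V : Type} (E : V -> V -> Prop) (x : V) : V -> Prop := fun y => E x y.
Definition in_nbhd {V : Type} (E : V -> V -> Prop) (x : V) : V -> Prop := fun y => E y x.

Definition induced_isomorphic {V T : Type} (E : V -> V -> Prop) (S : V -> Prop)
  (e : T -> T -> Prop) : Prop :=
  exists phi : T -> V,
    (forall a b, phi a = phi b -> a = b) /\
    (forall v, S v <-> exists t, phi t = v) /\
    (forall a b, e a b <-> E (phi a) (phi b)).

(* ---- Lachlan's exceptional finite homogeneous digraph H ----
   H is the 8-vertex digraph  \hat{C_3}  (Cherlin's notation): vertices
   top, bot and (i,t) with i : bool, t in Z/3; arcs
     top -> (false,t) -> bot -> (true,t) -> top,
     (i,t) -> (i,s)      iff  t -> s in C_3,
     (i,t) -> (~~i,s)    iff  s -> t in C_3. *)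
Inductive Z3 : Type := z0 | z1 | z2.

Definition C3_arc (a b : Z3) : Prop :=
  match a, b with
  | z0, z1 | z1, z2 | z2, z0 => True
  | _, _ => False
  end.

Inductive HV : Type :=
| Htop : HV
| Hbot : HV
| Hpt : bool -> Z3 -> HV.

Definition H_arc (x y : HV) : Prop :=
  match x, y with
  | Htop, Hpt false _ => True
  | Hpt true _, Htop => True
  | Hbot, Hpt true _ => True
  | Hpt false _, Hbot => True
  | Hpt i t, Hpt j s => if Bool.eqb i j then C3_arc t s else C3_arc s t
  | _, _ => False
  end.

(* Main.v *)
Require Import Defs.
From Stdlib Require Import List Bool Arith Lia Relations Classical ClassicalEpsilon.
Import ListNotations.


Definition C3b (a b : Z3) : bool :=
  match a, b with z0, z1 | z1, z2 | z2, z0 => true | _, _ => false end.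

Definition Hb (x y : HV) : bool :=
  match x, y with
  | Htop, Hpt false _ => true
  | Hpt true _, Htop => true
  | Hbot, Hpt true _ => true
  | Hpt false _, Hbot => true
  | Hpt i t, Hpt j s => if Bool.eqb i j then C3b t s else C3b s t
  | _, _ => false
  end.

Lemma Hb_spec a b : Hb a b = true <-> H_arc a b.
Proof.
  destruct a as [| |[] []]; destruct b as [| |[] []]; simpl; split; intro; try tauto; try discriminate; try exact I; contradiction.
Qed.

Definition z3eqb (a b : Z3) : bool :=
  match a, b with z0,z0 | z1,z1 | z2,z2 => true | _,_ => false end.
Definition heqb (a b : HV) : bool :=
  match a, b with
  | Htop, Htop => true | Hbot, Hbot => true
  | Hpt i t, Hpt j s => Bool.eqb i j && z3eqb t s
  | _, _ => false end.
Lemma heqb_spec a b : heqb a b = true <-> a = b.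
Proof.
  destruct a as [| |[] []]; destruct b as [| |[] []]; simpl; split; intro; congruence.
Qed.

Definition allH : list HV :=
  [Htop; Hbot; Hpt false z0; Hpt false z1; Hpt false z2; Hpt true z0; Hpt true z1; Hpt true z2].
Lemma allH_in a : In a allH.
Proof. destruct a as [| |[] []]; simpl; tauto. Qed.
Lemma allH_nodup : NoDup allH.
Proof. repeat constructor; simpl; intuition discriminate. Qed.

Definition fa (f : HV -> bool) := forallb f allH.
Definition ex (f : HV -> bool) := existsb f allH.
Lemma fa_spec f : fa f = true -> forall a, f a = true.
Proof. unfold fa; rewrite forallb_forall; intros H a; apply H, allH_in. Qed.
Lemma ex_spec f : ex f = true -> exists a, f a = true.
Proof. unfold ex; rewrite existsb_exists; intros [a [_ H]]; eauto. Qed.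

Definition anti (q : HV) : HV :=
  match q with Htop => Hbot | Hbot => Htop | Hpt i t => Hpt (negb i) t end.

Definition inC (c0 c1 c2 y : HV) := heqb y c0 || heqb y c1 || heqb y c2.

Definition out3 (p : HV) : HV * HV * HV :=
  match p with
  | Htop => (Hpt false z0, Hpt false z1, Hpt false z2)
  | Hbot => (Hpt true z0, Hpt true z1, Hpt true z2)
  | Hpt false z0 => (Hpt false z1, Hbot, Hpt true z2)
  | Hpt false z1 => (Hpt false z2, Hbot, Hpt true z0)
  | Hpt false z2 => (Hpt false z0, Hbot, Hpt true z1)
  | Hpt true z0 => (Hpt true z1, Htop, Hpt false z2)
  | Hpt true z1 => (Hpt true z2, Htop, Hpt false z0)
  | Hpt true z2 => (Hpt true z0, Htop, Hpt false z1)
  end.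

Definition HF1b := fa (fun p => let '(c0,c1,c2) := out3 p in
   Hb c0 c1 && Hb c1 c2 && Hb c2 c0 && fa (fun y => Bool.eqb (Hb p y) (inC c0 c1 c2 y))).
Lemma HF1b_ok : HF1b = true. Proof. vm_compute. reflexivity. Qed.

Definition HF2b := fa (fun c0 => fa (fun c1 => fa (fun c2 =>
  implb (Hb c0 c1 && Hb c1 c2 && Hb c2 c0)
   (ex (fun q => fa (fun y => Bool.eqb (Hb q y) (inC c0 c1 c2 y)))
    && fa (fun q => implb (Hb q c0 && Hb q c1 && Hb q c2)
         (fa (fun y => Bool.eqb (Hb q y) (inC c0 c1 c2 y)))))))).
Lemma HF2b_ok : HF2b = true. Proof. vm_compute. reflexivity. Qed.

Definition HFoutb := fa (fun q => fa (fun q' => implb (fa (fun y => Bool.eqb (Hb q y) (Hb q' y))) (heqb q q'))).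
Lemma HFoutb_ok : HFoutb = true. Proof. vm_compute. reflexivity. Qed.

Definition HF3b := fa (fun q => negb (Hb q (anti q)) && negb (Hb (anti q) q) && negb (heqb (anti q) q)
  && fa (fun z => implb (negb (heqb z q) && negb (Hb q z) && negb (Hb z q)) (heqb z (anti q)))
  && fa (fun c => implb (Hb q c) (Hb c (anti q)))
  && fa (fun y => heqb y q || Hb q y || heqb y (anti q) || Hb y q)
  && fa (fun y => implb (Hb y q) (fa (fun c => fa (fun c' =>
         implb (Hb q c && Hb q c' && Hb y c && Hb y c') (heqb c c')))
       && ex (fun c => Hb q c && Hb y c)))).
Lemma HF3b_ok : HF3b = true. Proof. vm_compute. reflexivity. Qed.

Definition pairs2 (p : HV) : list (HV * HV) :=
  filter (fun ac => let '(a,c) := ac in Hb a p && Hb p c && negb (Hb a c) && negb (Hb c a))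
    (list_prod allH allH).
Lemma pairs2_len p : length (pairs2 p) = 3.
Proof. destruct p as [| |[] []]; vm_compute; reflexivity. Qed.

Definition Hrev (a : HV) : HV :=
  match a with Htop => Hbot | Hbot => Htop
  | Hpt i z0 => Hpt i z0 | Hpt i z1 => Hpt i z2 | Hpt i z2 => Hpt i z1 end.
Definition HFrevb := fa (fun a => fa (fun b => Bool.eqb (Hb a b) (Hb (Hrev b) (Hrev a))) && heqb (Hrev (Hrev a)) a).
Lemma HFrevb_ok : HFrevb = true. Proof. vm_compute. reflexivity. Qed.


Lemma inC_spec c0 c1 c2 y : inC c0 c1 c2 y = true <-> (y = c0 \/ y = c1 \/ y = c2).
Proof.
  unfold inC. rewrite !orb_true_iff, !heqb_spec. tauto.
Qed.

Lemma eqb_true_iff' (a b : bool) : Bool.eqb a b = true -> (a = true <-> b = true).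
Proof. destruct a, b; simpl; intuition congruence. Qed.

Lemma Hb_irr a : Hb a a = false.
Proof. destruct a as [| |[] []]; reflexivity. Qed.
Lemma Hb_asym a b : Hb a b = true -> Hb b a = false.
Proof. destruct a as [| |[] []]; destruct b as [| |[] []]; simpl; congruence. Qed.

Lemma HF1 p : exists c0 c1 c2, out3 p = (c0,c1,c2) /\ Hb c0 c1 = true /\ Hb c1 c2 = true /\ Hb c2 c0 = true /\
  forall y, Hb p y = true <-> (y = c0 \/ y = c1 \/ y = c2).
Proof.
  pose proof (fa_spec _ HF1b_ok p) as H. cbv beta in H. cbv beta in H. destruct (out3 p) as [[c0 c1] c2] eqn:E. cbv beta iota zeta in H.
  rewrite !andb_true_iff in H. destruct H as [[[H1 H2] H3] H4].
  exists c0, c1, c2. repeat split; auto.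
  - intro Hy. apply inC_spec. apply (eqb_true_iff' _ _ (fa_spec _ H4 y)). auto.
  - intro Hy. apply inC_spec in Hy. apply (eqb_true_iff' _ _ (fa_spec _ H4 y)). auto.
Qed.

Lemma HF2 c0 c1 c2 : Hb c0 c1 = true -> Hb c1 c2 = true -> Hb c2 c0 = true ->
  exists q, forall y, Hb q y = true <-> (y = c0 \/ y = c1 \/ y = c2).
Proof.
  intros A B C. pose proof (fa_spec _ (fa_spec _ (fa_spec _ HF2b_ok c0) c1) c2) as H. cbv beta in H.
  simpl in H. rewrite A, B, C in H. simpl in H. rewrite andb_true_iff in H. destruct H as [H _].
  destruct (ex_spec _ H) as [q Hq]. exists q. intro y. rewrite <- inC_spec.
  apply eqb_true_iff'. exact (fa_spec _ Hq y).
Qed.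

Lemma HF2u c0 c1 c2 q : Hb c0 c1 = true -> Hb c1 c2 = true -> Hb c2 c0 = true ->
  Hb q c0 = true -> Hb q c1 = true -> Hb q c2 = true ->
  forall y, Hb q y = true <-> (y = c0 \/ y = c1 \/ y = c2).
Proof.
  intros A B C D F G. pose proof (fa_spec _ (fa_spec _ (fa_spec _ HF2b_ok c0) c1) c2) as H. cbv beta in H.
  simpl in H. rewrite A, B, C in H. simpl in H. rewrite andb_true_iff in H. destruct H as [_ H].
  pose proof (fa_spec _ H q) as Hq. cbv beta in Hq. rewrite D, F, G in Hq. simpl in Hq.
  intro y. rewrite <- inC_spec. apply eqb_true_iff'. exact (fa_spec _ Hq y).
Qed.

Lemma HFout q q' : (forall y, Hb q y = true <-> Hb q' y = true) -> q = q'.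
Proof.
  intro H. apply heqb_spec. pose proof (fa_spec _ (fa_spec _ HFoutb_ok q) q') as K. cbv beta in K.
  simpl in K. assert (fa (fun y => Bool.eqb (Hb q y) (Hb q' y)) = true) as K2.
  { unfold fa. apply forallb_forall. intros y _. specialize (H y).
    destruct (Hb q y), (Hb q' y); simpl; intuition. }
  rewrite K2 in K. exact K.
Qed.

Lemma HF3 q : Hb q (anti q) = false /\ Hb (anti q) q = false /\ anti q <> q /\
  (forall z, z <> q -> Hb q z = false -> Hb z q = false -> z = anti q) /\
  (forall c, Hb q c = true -> Hb c (anti q) = true) /\
  (forall y, y = q \/ Hb q y = true \/ y = anti q \/ Hb y q = true) /\
  (forall y, Hb y q = true -> (forall c c', Hb q c = true -> Hb q c' = true -> Hb y c = true -> Hb y c' = true -> c = c')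
      /\ exists c, Hb q c = true /\ Hb y c = true).
Proof.
  pose proof (fa_spec _ HF3b_ok q) as H. cbv beta in H. rewrite !andb_true_iff in H.
  destruct H as [[[[[[H1 H2] H3] H4] H5] H6] H7].
  repeat split.
  - destruct (Hb q (anti q)); auto; discriminate.
  - destruct (Hb (anti q) q); auto; discriminate.
  - intro E. rewrite <- heqb_spec in E. rewrite E in H3. discriminate.
  - intros z A B C. pose proof (fa_spec _ H4 z) as K. cbv beta in K. rewrite B, C in K.
    destruct (heqb z q) eqn:Z. apply heqb_spec in Z. contradiction. simpl in K. apply heqb_spec; exact K.
  - intros c A. pose proof (fa_spec _ H5 c) as K. cbv beta in K. rewrite A in K. exact K.
  - intro y. pose proof (fa_spec _ H6 y) as K. cbv beta in K. rewrite !orb_true_iff, !heqb_spec in K. tauto.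
  - intros c c' A B C D. pose proof (fa_spec _ H7 y) as K. cbv beta in K. rewrite H in K. simpl in K.
    rewrite andb_true_iff in K. destruct K as [K _].
    pose proof (fa_spec _ (fa_spec _ K c) c') as K2. cbv beta in K2. rewrite A, B, C, D in K2. apply heqb_spec; exact K2.
  - pose proof (fa_spec _ H7 y) as K. cbv beta in K. rewrite H in K. simpl in K.
    rewrite andb_true_iff in K. destruct K as [_ K]. destruct (ex_spec _ K) as [c Hc].
    rewrite andb_true_iff in Hc. eauto.
Qed.

Lemma HFrev a b : Hb a b = Hb (Hrev b) (Hrev a).
Proof.
  pose proof (fa_spec _ HFrevb_ok a) as H. cbv beta in H. rewrite andb_true_iff in H. destruct H as [H _].
  pose proof (fa_spec _ H b) as K. cbv beta in K. apply Bool.eqb_prop in K. exact K.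
Qed.
Lemma Hrev_inv a : Hrev (Hrev a) = a.
Proof. destruct a as [| |[] []]; reflexivity. Qed.

Lemma pairs2_spec p a c : In (a,c) (pairs2 p) <->
  (Hb a p = true /\ Hb p c = true /\ Hb a c = false /\ Hb c a = false).
Proof.
  unfold pairs2. rewrite filter_In, in_prod_iff. rewrite !andb_true_iff, !negb_true_iff.
  split. intros [_ H]; tauto. intro H; split; [split; apply allH_in | tauto].
Qed.
Lemma NoDup_list_prod {A B : Type} (l1 : list A) (l2 : list B) :
  NoDup l1 -> NoDup l2 -> NoDup (list_prod l1 l2).
Proof.
  induction l1 as [|a l1 IH]; intros N1 N2; simpl. constructor.
  inversion N1; subst. apply NoDup_app.
  - apply NoDup_map_NoDup_ForallPairs; auto. intros u v _ _ E; inversion E; auto.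
  - auto.
  - intros [p q] K1 K2. apply in_map_iff in K1. destruct K1 as [y [E _]]. inversion E; subst.
    apply in_prod_iff in K2. tauto.
Qed.

Lemma pairs2_nodup p : NoDup (pairs2 p).
Proof. apply NoDup_filter, NoDup_list_prod; apply allH_nodup. Qed.


Definition dec (P : Prop) : bool := if excluded_middle_informative P then true else false.
Lemma dec_spec P : dec P = true <-> P.
Proof. unfold dec; destruct (excluded_middle_informative P); split; intro; auto; discriminate || contradiction. Qed.
Lemma dec_false P : dec P = false <-> ~ P.
Proof. unfold dec; destruct (excluded_middle_informative P); split; intro; auto; try discriminate; contradiction. Qed.

Definition count {T} (l : list T) (P : T -> Prop) : nat := length (filter (fun y => dec (P y)) l).
Definition card_is {T} (P : T -> Prop) (n : nat) : Prop :=
  exists l, NoDup l /\ (forall y, In y l <-> P y) /\ length l = n.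

Definition eqdec {T} (a b : T) : {a = b} + {a <> b} := excluded_middle_informative (a = b).

Lemma count_card {T} (l : list T) P : NoDup l -> card_is (fun y => In y l /\ P y) (count l P).
Proof.
  intro N. exists (filter (fun y => dec (P y)) l). split; [apply NoDup_filter; auto|split; auto].
  intro y. rewrite filter_In, dec_spec. tauto.
Qed.

Lemma card_ext {T} (P Q : T -> Prop) n : card_is P n -> (forall y, P y <-> Q y) -> card_is Q n.
Proof. intros [l [N [I L]]] H. exists l. split; auto. split; auto. intro y; rewrite I; auto. Qed.

Lemma card_le {T} (P Q : T -> Prop) n m : card_is P n -> card_is Q m -> (forall y, Q y -> P y) -> m <= n.
Proof.
  intros [lp [Np [Ip Lp]]] [lq [Nq [Iq Lq]]] H. subst. apply NoDup_incl_length; auto.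
  intros y Hy. apply Ip, H, Iq, Hy.
Qed.

Lemma card_unique {T} (P : T -> Prop) n m : card_is P n -> card_is P m -> n = m.
Proof. intros A B. apply Nat.le_antisymm; eapply card_le; eauto. Qed.

Lemma card_lt {T} (P Q : T -> Prop) n m a : card_is P n -> card_is Q m -> (forall y, Q y -> P y) ->
  P a -> ~ Q a -> m < n.
Proof.
  intros [lp [Np [Ip Lp]]] [lq [Nq [Iq Lq]]] H Pa Qa. subst.
  change (S (length lq) <= length lp). change (S (length lq)) with (length (a :: lq)).
  apply NoDup_incl_length. constructor; auto. intro I; apply Qa, Iq, I.
  intros y [<-|Hy]. apply Ip, Pa. apply Ip, H, Iq, Hy.
Qed.

Lemma card_exists {T} (P : T -> Prop) l : (forall y, P y -> In y l) -> exists n, card_is P n.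
Proof.
  intro H. exists (count (nodup eqdec l) P).
  eapply card_ext. apply count_card, NoDup_nodup.
  intro y. pose proof (nodup_In eqdec l y). split; [tauto|]. intro; split; auto. apply H0; auto.
Qed.

Lemma card_map {T U} (P : T -> Prop) (Q : U -> Prop) (f : T -> U) n :
  card_is P n -> (forall a b, f a = f b -> a = b) -> (forall y, Q y <-> exists x, P x /\ f x = y) -> card_is Q n.
Proof.
  intros [l [N [I L]]] Inj H. exists (map f l). split; [|split].
  - apply NoDup_map_NoDup_ForallPairs; auto. intros a b _ _; apply Inj.
  - intro y. rewrite H, in_map_iff. split; intros [x [A B]]; exists x; split; auto; apply I; auto.
  - rewrite length_map; auto.
Qed.

Lemma card_list {T} (l : list T) P : NoDup l -> (forall y, In y l <-> P y) -> card_is P (length l).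
Proof. intros; exists l; auto. Qed.

Lemma card_sub_two {T} (P : T -> Prop) (w b : T) : card_is P 2 -> (forall z, P z -> z = w \/ z = b) -> P b.
Proof.
  intros C H. destruct (classic (P b)) as [|nb]; auto. exfalso.
  assert (card_is (fun z => z = w) 1) as C1 by (exists [w]; repeat split; [repeat constructor; simpl; tauto| simpl; intros [->|[]]; auto | simpl; intros ->; auto]).
  assert (2 <= 1). eapply card_le. exact C1. exact C. intros y Py. destruct (H y Py); auto. subst; contradiction.
  lia.
Qed.

Lemma count_part3 {T} (l : list T) (P Q R : T -> Prop) :
  (forall y, In y l -> P y \/ Q y \/ R y) -> (forall y, P y -> ~ Q y) -> (forall y, P y -> ~ R y) -> (forall y, Q y -> ~ R y) ->
  count l P + count l Q + count l R = length l.
Proof.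
  intros H A B C. induction l as [|a l IH]; simpl. reflexivity.
  unfold count in *; simpl.
  assert (IH' : length (filter (fun y => dec (P y)) l) + length (filter (fun y => dec (Q y)) l) + length (filter (fun y => dec (R y)) l) = length l).
  { apply IH. intros; apply H; simpl; auto. }
  destruct (H a (or_introl eq_refl)) as [Pa|[Qa|Ra]].
  - assert (dec (P a) = true) as -> by (apply dec_spec; auto).
    assert (dec (Q a) = false) as -> by (apply dec_false; auto).
    assert (dec (R a) = false) as -> by (apply dec_false; auto). simpl; lia.
  - assert (dec (P a) = false) as -> by (apply dec_false; intro; eapply A; eauto).
    assert (dec (Q a) = true) as -> by (apply dec_spec; auto).
    assert (dec (R a) = false) as -> by (apply dec_false; auto). simpl; lia.
  - assert (dec (P a) = false) as -> by (apply dec_false; intro; eapply B; eauto).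
    assert (dec (Q a) = false) as -> by (apply dec_false; intro; eapply C; eauto).
    assert (dec (R a) = true) as -> by (apply dec_spec; auto). simpl; lia.
Qed.

Fixpoint sumf {T} (f : T -> nat) (l : list T) : nat :=
  match l with [] => 0 | a :: l => f a + sumf f l end.

Lemma sumf_const {T} (f : T -> nat) l c : (forall a, In a l -> f a = c) -> sumf f l = length l * c.
Proof. induction l as [|a l IH]; simpl; intros H. reflexivity. rewrite (H a (or_introl eq_refl)), IH by auto. lia. Qed.

Lemma sumf_add {T} (f g : T -> nat) l : sumf (fun a => f a + g a) l = sumf f l + sumf g l.
Proof. induction l; simpl; lia. Qed.

Lemma count_cons {T} a (l : list T) P : count (a :: l) P = (if dec (P a) then 1 else 0) + count l P.
Proof. unfold count; simpl. destruct (dec (P a)); reflexivity. Qed.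


Lemma double_count {A B} (la : list A) (lb : list B) (R : A -> B -> Prop) :
  sumf (fun a => count lb (R a)) la = sumf (fun b => count la (fun a => R a b)) lb.
Proof.
  induction la as [|a la IH]; simpl.
  - induction lb; simpl; auto.
  - rewrite IH. transitivity (sumf (fun b => (if dec (R a b) then 1 else 0) + count la (fun a0 => R a0 b)) lb).
    + rewrite sumf_add. f_equal. clear. induction lb; simpl; auto. rewrite count_cons. lia.
    + clear IH. induction lb; simpl; auto. rewrite count_cons, IHlb. reflexivity.
Qed.

Lemma double_count_const {A B} (la : list A) (lb : list B) (R : A -> B -> Prop) p q :
  (forall a, In a la -> count lb (R a) = p) -> (forall b, In b lb -> count la (fun a => R a b) = q) ->
  length la * p = length lb * q.
Proof.
  intros Hp Hq. rewrite <- (sumf_const _ _ _ Hp), <- (sumf_const _ _ _ Hq). apply double_count.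
Qed.

Lemma count_prod {A B} (l1 : list A) (l2 : list B) (P : A -> B -> Prop) c :
  (forall a, In a l1 -> count l2 (P a) = c) ->
  count (list_prod l1 l2) (fun pr => P (fst pr) (snd pr)) = length l1 * c.
Proof.
  induction l1 as [|a l1 IH]; simpl; intros H; auto.
  unfold count in *. rewrite filter_app, length_app. rewrite IH by auto.
  rewrite <- (H a (or_introl eq_refl)). f_equal.
  clear. induction l2; simpl; auto. destruct (dec (P a a0)); simpl; auto.
Qed.


Section Ext.
Context {V : Type} (E : V -> V -> Prop).

Fixpoint idx (v : V) (l : list V) : nat :=
  match l with [] => 0 | a :: l => if eqdec v a then 0 else S (idx v l) end.

Lemma idx_spec v l d : In v l -> idx v l < length l /\ nth (idx v l) l d = v.
Proof.
  induction l as [|a l IH]; simpl; intros H. contradiction.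
  destruct (eqdec v a) as [->|ne]. split; auto; lia.
  destruct H as [->|H]. contradiction. destruct (IH H). split; auto; lia.
Qed.

Lemma idx_nth l d i : NoDup l -> i < length l -> idx (nth i l d) l = i.
Proof.
  intros N Hi. pose proof (idx_spec (nth i l d) l d (nth_In _ _ Hi)) as [A B].
  eapply NoDup_nth; eauto.
Qed.

Lemma rt_hub (A : V -> Prop) c : A c -> (forall y, A y -> y = c \/ adj E c y) -> connected_on E A.
Proof.
  intros Ac H x y Ax Ay. apply rt_trans with c.
  - destruct (H x Ax) as [->|Hx]. apply rt_refl. apply rt_step. split; auto. split; auto.
    destruct Hx; [right|left]; auto.
  - destruct (H y Ay) as [->|Hy]. apply rt_refl. apply rt_step. auto.
Qed.

Hypothesis CH : C_homogeneous E.

Lemma ext (l1 l2 : list V) (d : V) : NoDup l1 -> NoDup l2 -> length l1 = length l2 ->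
  (forall i j, i < length l1 -> j < length l1 -> (E (nth i l1 d) (nth j l1 d) <-> E (nth i l2 d) (nth j l2 d))) ->
  (forall j, j < length l1 -> j = 0 \/ adj E (nth 0 l1 d) (nth j l1 d)) ->
  exists g, automorphism E g /\ forall i, i < length l1 -> g (nth i l1 d) = nth i l2 d.
Proof.
  intros N1 N2 L Corr Hub.
  destruct l1 as [|a1 r1] eqn:El1.
  { exists (fun v => v). split; [split; [exists (fun v => v); split; auto | tauto] | simpl; intros; lia]. }
  rewrite <- El1 in *.
  assert (0 < length l1) as L0 by (subst; simpl; lia).
  set (f := fun v => nth (idx v l1) l2 d).
  destruct (CH (fun v => In v l1) (fun v => In v l2) f) as [g [Ag Hg]].
  - exists l1; auto.
  - apply rt_hub with (nth 0 l1 d). apply nth_In; auto.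
    intros y Hy. destruct (In_nth _ _ d Hy) as [j [Hj <-]]. destruct (Hub j Hj) as [->|]; auto.
  - exists l2; auto.
  - apply rt_hub with (nth 0 l2 d). apply nth_In; lia.
    intros y Hy. destruct (In_nth _ _ d Hy) as [j [Hj <-]]. rewrite <- L in Hj.
    destruct (Hub j Hj) as [->|Ha]. auto. right.
    destruct Ha as [Ha|Ha]; [left|right]; apply Corr; auto.
  - split; [|split; [|split]].
    + intros v Hv. unfold f. apply nth_In. rewrite <- L. apply (idx_spec v l1 d Hv).
    + intros x y Hx Hy Exy. unfold f in Exy.
      destruct (idx_spec x l1 d Hx) as [Ix Nx]. destruct (idx_spec y l1 d Hy) as [Iy Ny].
      assert (idx x l1 = idx y l1). { eapply NoDup_nth; eauto; lia. }
      rewrite <- Nx, <- Ny, H; auto.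
    + intros y Hy. destruct (In_nth _ _ d Hy) as [j [Hj <-]]. exists (nth j l1 d). split.
      apply nth_In; lia. unfold f. rewrite idx_nth; auto. lia.
    + intros x y Hx Hy. unfold f.
      destruct (idx_spec x l1 d Hx) as [Ix Nx]. destruct (idx_spec y l1 d Hy) as [Iy Ny].
      rewrite <- Nx at 1. rewrite <- Ny at 1. apply Corr; auto.
  - exists g. split; auto. intros i Hi. rewrite Hg by (apply nth_In; auto). unfold f. rewrite idx_nth; auto.
Qed.

End Ext.


Section Basics.
Context {V : Type} (E : V -> V -> Prop).
Hypothesis dig : is_digraph E.
Hypothesis CH : C_homogeneous E.

Definition Lab (v : V) (psi : HV -> V) : Prop :=
  (forall a b, psi a = psi b -> a = b) /\ (forall y, E v y <-> exists t, psi t = y) /\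
  (forall a b, H_arc a b <-> E (psi a) (psi b)).

Lemma irr a : E a a -> False.
Proof. destruct dig as [I _]. apply I. Qed.
Lemma asym a b : E a b -> E b a -> False.
Proof. destruct dig as [_ A]. apply A. Qed.
Lemma arc_neq a b : E a b -> a <> b.
Proof. intros H ->. exact (irr _ H). Qed.

Lemma lab_arc v psi a b : Lab v psi -> (E (psi a) (psi b) <-> Hb a b = true).
Proof. intros [_ [_ L]]. rewrite Hb_spec, L. tauto. Qed.
Lemma lab_in v psi a : Lab v psi -> E v (psi a).
Proof. intros [_ [L _]]. apply L. eauto. Qed.
Lemma lab_out v psi y : Lab v psi -> E v y -> exists a, psi a = y.
Proof. intros [_ [L _]] H. apply L, H. Qed.
Lemma lab_inj v psi a b : Lab v psi -> psi a = psi b -> a = b.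
Proof. intros [L _]. apply L. Qed.

Lemma aut_inv g : automorphism E g -> exists h, (forall x, h (g x) = x) /\ (forall y, g (h y) = y).
Proof. intros [H _]. exact H. Qed.
Lemma aut_arc g a b : automorphism E g -> (E a b <-> E (g a) (g b)).
Proof. intros [_ H]. apply H. Qed.
Lemma aut_inj g a b : automorphism E g -> g a = g b -> a = b.
Proof. intros A H. destruct (aut_inv g A) as [h [H1 _]]. rewrite <- (H1 a), <- (H1 b), H. reflexivity. Qed.

Lemma card_aut g (P Q : V -> Prop) n : automorphism E g -> (forall y, Q (g y) <-> P y) -> card_is P n -> card_is Q n.
Proof.
  intros A H C. apply (card_map P Q g n C). intros; eapply aut_inj; eauto.
  intro y. destruct (aut_inv g A) as [h [H1 H2]]. split.
  - intro Qy. exists (h y). rewrite <- H, H2. auto.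
  - intros [z [Pz <-]]. apply H, Pz.
Qed.

Ltac arcs := split; intro; first [ assumption
  | exfalso; match goal with H1 : E ?a ?a |- _ => exact (irr _ H1) end
  | exfalso; match goal with H1 : E ?a ?b, H2 : E ?b ?a |- _ => exact (asym _ _ H1 H2) end
  | exfalso; match goal with H1 : ~ E ?a ?b, H2 : E ?a ?b |- _ => exact (H1 H2) end ].

Lemma lab_all x phi : Lab x phi -> forall v, exists psi, Lab v psi.
Proof.
  intros L v. destruct (ext E CH [x] [v] x) as [g [Ag Hg]].
  - repeat constructor; simpl; tauto.
  - repeat constructor; simpl; tauto.
  - reflexivity.
  - intros [|[|i]] [|[|j]] Hi Hj; simpl in *; try lia. arcs.
  - intros [|j] Hj; simpl in *; [left; reflexivity | lia].
  - specialize (Hg 0 ltac:(simpl; lia)). simpl in Hg.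
    exists (fun a => g (phi a)). destruct L as [L1 [L2 L3]]. split; [|split].
    + intros a b H. apply L1. eapply aut_inj; eauto.
    + intro y. destruct (aut_inv g Ag) as [h [H1 H2]]. rewrite <- (H2 y), <- Hg, <- aut_arc by auto.
      rewrite L2. split; intros [t Ht]; exists t. rewrite Ht; auto. apply (aut_inj g); auto.
    + intros a b. rewrite L3. apply aut_arc; auto.
Qed.

Lemma arc_trans u v u' v' : E u v -> E u' v' -> exists g, automorphism E g /\ g u = u' /\ g v = v'.
Proof.
  intros A B. destruct (ext E CH [u;v] [u';v'] u) as [g [Ag Hg]].
  - pose proof (arc_neq _ _ A). repeat constructor; simpl; intuition congruence.
  - pose proof (arc_neq _ _ B). repeat constructor; simpl; intuition congruence.
  - reflexivity.
  - intros [|[|i]] [|[|j]] Hi Hj; simpl in *; try lia; arcs.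
  - intros [|[|j]] Hj; simpl in *; [left; reflexivity | right; left; auto | lia].
  - exists g. split; auto. split. apply (Hg 0); simpl; lia. apply (Hg 1); simpl; lia.
Qed.

Lemma twoarc_trans u v z u' v' z' : E u v -> E v z -> ~ E u z -> ~ E z u ->
  E u' v' -> E v' z' -> ~ E u' z' -> ~ E z' u' ->
  exists g, automorphism E g /\ g u = u' /\ g v = v' /\ g z = z'.
Proof.
  intros A B C D A' B' C' D'. destruct (ext E CH [v;u;z] [v';u';z'] v) as [g [Ag Hg]].
  - assert (u <> z) by (intros ->; exact (asym _ _ A B)).
    pose proof (arc_neq _ _ A). pose proof (arc_neq _ _ B). repeat constructor; simpl; intuition congruence.
  - assert (u' <> z') by (intros ->; exact (asym _ _ A' B')).
    pose proof (arc_neq _ _ A'). pose proof (arc_neq _ _ B'). repeat constructor; simpl; intuition congruence.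
  - reflexivity.
  - intros [|[|[|i]]] [|[|[|j]]] Hi Hj; simpl in *; try lia; arcs.
  - intros [|[|[|j]]] Hj; simpl in *; [left; reflexivity | right; right; auto | right; left; auto | lia].
  - exists g. split; auto. split; [|split]. apply (Hg 1); simpl; lia. apply (Hg 0); simpl; lia. apply (Hg 2); simpl; lia.
Qed.

End Basics.


Section Local.
Context {V : Type} (E : V -> V -> Prop).
Hypothesis dig : is_digraph E.
Hypothesis CH : C_homogeneous E.

Ltac arcs := split; intro; first [ assumption
  | exfalso; match goal with H1 : E ?a ?a |- _ => exact (irr E dig _ H1) end
  | exfalso; match goal with H1 : E ?a ?b, H2 : E ?b ?a |- _ => exact (asym E dig _ _ H1 H2) end
  | exfalso; match goal with H1 : ~ E ?a ?b, H2 : E ?a ?b |- _ => exact (H1 H2) end ].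

Lemma A_C3 u v psi : Lab E u psi -> E u v -> exists a0 a1 a2, E a0 a1 /\ E a1 a2 /\ E a2 a0 /\
  forall y, (E u y /\ E v y) <-> (y = a0 \/ y = a1 \/ y = a2).
Proof.
  intros L A. destruct (lab_out E u psi v L A) as [p <-].
  destruct (HF1 p) as [c0 [c1 [c2 [_ [H01 [H12 [H20 Hp]]]]]]].
  exists (psi c0), (psi c1), (psi c2). split; [|split; [|split]]; try (apply (lab_arc E u psi); auto).
  intro y. split.
  - intros [Hy1 Hy]. destruct (lab_out E u psi y L Hy1) as [q <-].
    apply (lab_arc E u psi) in Hy; auto. apply Hp in Hy. intuition congruence.
  - intros Hy. split.
    + destruct Hy as [ -> | [ -> | -> ] ]; apply (lab_in E u psi); auto.
    + destruct Hy as [ -> | [ -> | -> ] ]; apply (lab_arc E u psi); auto; apply Hp; auto.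
Qed.

Definition TB (v a0 a1 a2 w bb : V) : Prop :=
  E v w /\ E w a0 /\ E w a1 /\ E w a2 /\
  (forall z, E v z -> E z a0 -> E z a1 -> E z a2 -> z = w) /\
  E v bb /\ ~ E w bb /\ ~ E bb w /\ bb <> w /\
  (forall z, E v z -> z <> w -> ~ E w z -> ~ E z w -> z = bb) /\
  E a0 bb /\ E a1 bb /\ E a2 bb /\
  (forall z, E v z -> z = w \/ z = a0 \/ z = a1 \/ z = a2 \/ z = bb \/ E z w) /\
  (forall z, E v z -> E z w -> (E z a0 \/ E z a1 \/ E z a2) /\
      (E z a0 -> E z a1 -> False) /\ (E z a1 -> E z a2 -> False) /\ (E z a0 -> E z a2 -> False)).

Lemma TopBot v psi a0 a1 a2 : Lab E v psi -> E v a0 -> E v a1 -> E v a2 -> E a0 a1 -> E a1 a2 -> E a2 a0 ->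
  exists w bb, TB v a0 a1 a2 w bb.
Proof.
  intros L V0 V1 V2 A01 A12 A20.
  destruct (lab_out E v psi a0 L V0) as [c0 <-].
  destruct (lab_out E v psi a1 L V1) as [c1 <-].
  destruct (lab_out E v psi a2 L V2) as [c2 <-].
  rewrite (lab_arc E v psi) in A01, A12, A20 by auto.
  destruct (HF2 c0 c1 c2 A01 A12 A20) as [q Hq].
  destruct (HF3 q) as [T1 [T2 [T3 [T4 [T5 [T6 T7]]]]]].
  assert (forall a b, E (psi a) (psi b) <-> Hb a b = true) as Ar by (intros; apply (lab_arc E v psi); auto).
  assert (forall a b, ~ E (psi a) (psi b) <-> Hb a b = false) as Nr.
  { intros a b. rewrite Ar. destruct (Hb a b); split; intro; try congruence; auto. }
  assert (forall a b, psi a = psi b -> a = b) as Inj by (intros; eapply (lab_inj E v psi); eauto).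
  assert (forall z, E v z -> exists y, psi y = z) as Out by (intros; eapply (lab_out E v psi); eauto).
  exists (psi q), (psi (anti q)).
  split; [apply (lab_in E v psi _ L)|].
  split; [apply Ar, Hq; auto|]. split; [apply Ar, Hq; auto|]. split; [apply Ar, Hq; auto|].
  split.
  { intros z Hz Z0 Z1 Z2. destruct (Out z Hz) as [y <-]. rewrite Ar in Z0, Z1, Z2.
    f_equal. apply HFout. intro y'. rewrite (HF2u c0 c1 c2 y A01 A12 A20 Z0 Z1 Z2), Hq. tauto. }
  split; [apply (lab_in E v psi _ L)|].
  split; [apply Nr; auto|]. split; [apply Nr; auto|].
  split; [intro H; apply T3, Inj, H|].
  split.
  { intros z Hz Zw Z1 Z2. destruct (Out z Hz) as [y <-]. rewrite Nr in Z1, Z2. f_equal. apply T4; auto.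
    intros ->; auto. }
  split; [apply Ar, T5, Hq; auto|]. split; [apply Ar, T5, Hq; auto|]. split; [apply Ar, T5, Hq; auto|].
  split.
  { intros z Hz. destruct (Out z Hz) as [y <-]. destruct (T6 y) as [ -> | [H | [ -> | H ] ] ].
    - left; reflexivity.
    - apply Hq in H. destruct H as [ -> | [ -> | -> ] ]; tauto.
    - tauto.
    - right; right; right; right; right. apply Ar; auto. }
  { intros z Hz Zw. destruct (Out z Hz) as [y <-]. apply Ar in Zw. destruct (T7 y Zw) as [U [c [Qc Yc]]].
    assert (Hc := Qc). apply Hq in Hc.
    assert (c0 <> c1) as N01 by (intros ->; rewrite Hb_irr in A01; discriminate).
    assert (c1 <> c2) as N12 by (intros ->; rewrite Hb_irr in A12; discriminate).
    assert (c0 <> c2) as N02 by (intros ->; rewrite Hb_irr in A20; discriminate).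
    split.
    - destruct Hc as [ -> | [ -> | -> ] ]; [left|right;left|right;right]; apply Ar; auto.
    - rewrite !Ar. repeat split; intros X Y; [apply N01|apply N12|apply N02]; apply (U _ _); auto; apply Hq; auto. }
Qed.


Definition Dt (u v : V) : V -> Prop := fun y => E v y /\ E y u.

Lemma DT (d2 : forall u v, E u v -> card_is (Dt u v) 2) u v a0 a1 a2 w bb :
  E u v -> (forall y, (E u y /\ E v y) <-> (y = a0 \/ y = a1 \/ y = a2)) ->
  E a0 a1 -> E a1 a2 -> E a2 a0 -> TB v a0 a1 a2 w bb ->
  E bb u /\ (forall z, E v z -> E z u -> z = w \/ z = bb).
Proof.
  intros Euv HA A01 A12 A20 TBH.
  destruct TBH as [Vw [W0 [W1 [W2 [Wu [Vb [Nwb [Nbw [Bw [Bu [B0 [B1 [B2 [Part InL]]]]]]]]]]]]]].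
  assert (E u a0 /\ E v a0) as [U0 V0] by (apply HA; auto).
  assert (E u a1 /\ E v a1) as [U1 V1] by (apply HA; auto).
  assert (E u a2 /\ E v a2) as [U2 V2] by (apply HA; auto).
  destruct (ext E CH [u;v;a0;a1;a2] [u;v;a1;a2;a0] u) as [g [Ag Hg]].
  - pose proof (arc_neq E dig _ _ Euv). pose proof (arc_neq E dig _ _ U0). pose proof (arc_neq E dig _ _ U1).
    pose proof (arc_neq E dig _ _ U2). pose proof (arc_neq E dig _ _ V0). pose proof (arc_neq E dig _ _ V1).
    pose proof (arc_neq E dig _ _ V2). pose proof (arc_neq E dig _ _ A01). pose proof (arc_neq E dig _ _ A12).
    pose proof (arc_neq E dig _ _ A20). repeat constructor; simpl; intuition congruence.
  - pose proof (arc_neq E dig _ _ Euv). pose proof (arc_neq E dig _ _ U0). pose proof (arc_neq E dig _ _ U1).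
    pose proof (arc_neq E dig _ _ U2). pose proof (arc_neq E dig _ _ V0). pose proof (arc_neq E dig _ _ V1).
    pose proof (arc_neq E dig _ _ V2). pose proof (arc_neq E dig _ _ A01). pose proof (arc_neq E dig _ _ A12).
    pose proof (arc_neq E dig _ _ A20). repeat constructor; simpl; intuition congruence.
  - reflexivity.
  - intros [|[|[|[|[|i]]]]] [|[|[|[|[|j]]]]] Hi Hj; simpl in *; try lia; arcs.
  - intros [|[|[|[|[|j]]]]] Hj; simpl in *; first [left; reflexivity | right; left; assumption | lia].
  - assert (gu : g u = u) by (apply (Hg 0); simpl; lia).
    assert (gv : g v = v) by (apply (Hg 1); simpl; lia).
    assert (g0 : g a0 = a1) by (apply (Hg 2); simpl; lia).
    assert (g1 : g a1 = a2) by (apply (Hg 3); simpl; lia).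
    assert (g2 : g a2 = a0) by (apply (Hg 4); simpl; lia).
    clear Hg.
    assert (GA : forall a b, E a b <-> E (g a) (g b)) by (intros; apply (aut_arc E); auto).
    assert (gw : g w = w).
    { apply Wu.
      - rewrite <- gv. apply (proj1 (GA _ _)); auto.
      - rewrite <- g2. apply (proj1 (GA _ _)); auto.
      - rewrite <- g0. apply (proj1 (GA _ _)); auto.
      - rewrite <- g1. apply (proj1 (GA _ _)); auto. }
    assert (DtI : forall z, Dt u v z -> Dt u v (g z)).
    { intros z [Z1 Z2]. split. rewrite <- gv; apply (proj1 (GA _ _)); auto. rewrite <- gu; apply (proj1 (GA _ _)); auto. }
    assert (InI : forall z, E z w -> E (g z) w) by (intros z Z; rewrite <- gw; apply (proj1 (GA _ _)); auto).
    assert (NoIn : forall z, Dt u v z -> E z w -> False).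
    { intros z Dz Zw.
      set (z1 := g z). set (z2 := g z1).
      assert (Dt u v z1) as D1 by (apply DtI; auto). assert (Dt u v z2) as D2 by (apply DtI; auto).
      assert (E z1 w) as Z1w by (apply InI; auto). assert (E z2 w) as Z2w by (apply InI; auto).
      assert (G0 : forall y, E y a0 -> E (g y) a1) by (intros y Y; rewrite <- g0; apply (proj1 (GA _ _)); auto).
      assert (G1 : forall y, E y a1 -> E (g y) a2) by (intros y Y; rewrite <- g1; apply (proj1 (GA _ _)); auto).
      assert (G2 : forall y, E y a2 -> E (g y) a0) by (intros y Y; rewrite <- g2; apply (proj1 (GA _ _)); auto).
      destruct Dz as [Vz Zu]. destruct D1 as [Vz1 Z1u]. destruct D2 as [Vz2 Z2u].
      destruct (InL z Vz Zw) as [Hz [X01 [X12 X02]]].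
      destruct (InL z1 Vz1 Z1w) as [_ [Y01 [Y12 Y02]]].
      assert (z <> z1 /\ z <> z2 /\ z1 <> z2) as [N1 [N2 N3]].
      { destruct Hz as [H|[H|H]].
        - assert (E z1 a1) by (apply G0; auto). assert (E z2 a2) by (apply G1; auto).
          repeat split; intro Q; [rewrite <- Q in *|rewrite <- Q in *|rewrite <- Q in *]; eauto.
        - assert (E z1 a2) by (apply G1; auto). assert (E z2 a0) by (apply G2; auto).
          repeat split; intro Q; [rewrite <- Q in *|rewrite <- Q in *|rewrite <- Q in *]; eauto.
        - assert (E z1 a0) by (apply G2; auto). assert (E z2 a1) by (apply G0; auto).
          repeat split; intro Q; [rewrite <- Q in *|rewrite <- Q in *|rewrite <- Q in *]; eauto. }
      assert (3 <= 2).
      { eapply card_le. apply d2, Euv. apply (card_list [z; z1; z2] (fun y => In y [z; z1; z2])).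
        repeat constructor; simpl; intuition congruence. tauto.
        intros y Y. simpl in Y. destruct Y as [<-|[<-|[<-|[]]]]; split; auto. }
      lia. }
    assert (Sub : forall z, E v z -> E z u -> z = w \/ z = bb).
    { intros z Vz Zu. destruct (Part z Vz) as [H|[H|[H|[H|[H|H]]]]].
      - tauto.
      - subst. exfalso. exact (asym E dig _ _ U0 Zu).
      - subst. exfalso. exact (asym E dig _ _ U1 Zu).
      - subst. exfalso. exact (asym E dig _ _ U2 Zu).
      - tauto.
      - exfalso. apply (NoIn z); auto. split; auto. }
    split; auto.
    assert (Dt u v bb) as Hbb. { apply card_sub_two with w. apply d2, Euv. intros z [Z1 Z2]. auto. }
    destruct Hbb; auto.
Qed.

End Local.


Section Count.
Context {V : Type} (E : V -> V -> Prop).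
Hypothesis dig : is_digraph E.
Hypothesis LF : locally_finite E.
Hypothesis CH : C_homogeneous E.
Variable x : V.
Variable phi : HV -> V.
Hypothesis Lx : Lab E x phi.

Lemma fin_adj c (P : V -> Prop) : (forall y, P y -> adj E c y) -> exists n, card_is P n.
Proof. intro H. destruct (LF c) as [l Hl]. apply card_exists with l. intros; apply Hl, H; auto. Qed.

Lemma card_pos (P : V -> Prop) n a : card_is P n -> P a -> 0 < n.
Proof. intros [l [_ [I L]]] Pa. apply I in Pa. destruct l; simpl in *. contradiction. lia. Qed.

Lemma arcH a b : Hb a b = true -> E (phi a) (phi b).
Proof. intro; apply (lab_arc E x phi); auto. Qed.
Lemma narcH a b : Hb a b = false -> ~ E (phi a) (phi b).
Proof. intros H K. apply (lab_arc E x phi) in K; auto. congruence. Qed.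

Let t := phi Htop.
Let bt := phi Hbot.
Let f0 := phi (Hpt false z0).
Let t1 := phi (Hpt true z1).
Let t2 := phi (Hpt true z2).

Lemma acard u v : E u v -> card_is (fun y => E u y /\ E v y) 3.
Proof.
  intro A. destruct (lab_all E dig CH x phi Lx u) as [psi L].
  destruct (A_C3 E u v psi L A) as [a0 [a1 [a2 [A01 [A12 [A20 H]]]]]].
  eapply card_ext. apply (card_list [a0;a1;a2] (fun y => In y [a0;a1;a2])).
  - pose proof (arc_neq E dig _ _ A01). pose proof (arc_neq E dig _ _ A12). pose proof (arc_neq E dig _ _ A20).
    repeat constructor; simpl; intuition congruence.
  - tauto.
  - intro y. rewrite H. simpl. intuition congruence.
Qed.

Lemma main_count : forall u v, E u v -> card_is (Dt E u v) 2.
Proof.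
  assert (Etf0 : E t f0) by (apply arcH; reflexivity).
  destruct (fin_adj t (Dt E t f0)) as [d Hd]. { intros y [_ H]. right; auto. }
  assert (dall : forall u v, E u v -> card_is (Dt E u v) d).
  { intros u v A. destruct (arc_trans E dig CH t f0 u v Etf0 A) as [g [Ag [gu gv]]].
    apply (card_aut E g (Dt E t f0)); auto. intro y. unfold Dt. rewrite <- gu, <- gv, <- !(aut_arc E g); auto. tauto. }
  destruct (fin_adj t (fun y => E y t /\ E y f0)) as [cs Hcs]. { intros y [H _]. right; auto. }
  assert (sall : forall u v, E u v -> card_is (fun y => E y u /\ E y v) cs).
  { intros u v A. destruct (arc_trans E dig CH t f0 u v Etf0 A) as [g [Ag [gu gv]]].
    apply (card_aut E g (fun y => E y t /\ E y f0)); auto. intro y. rewrite <- gu, <- gv, <- !(aut_arc E g); auto. tauto. }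
  assert (Ef0b : E f0 bt) by (apply arcH; reflexivity).
  assert (Ntb : ~ E t bt) by (apply narcH; reflexivity).
  assert (Nbt : ~ E bt t) by (apply narcH; reflexivity).
  destruct (fin_adj t (fun s => E s f0 /\ E s t /\ E s bt)) as [r Hr]. { intros y [_ [H _]]. right; auto. }
  assert (rall : forall u v z, E u v -> E v z -> ~ E u z -> ~ E z u -> card_is (fun s => E s v /\ E s u /\ E s z) r).
  { intros u v z A B C D. destruct (twoarc_trans E dig CH t f0 bt u v z Etf0 Ef0b Ntb Nbt A B C D) as [g [Ag [gu [gv gz]]]].
    apply (card_aut E g (fun s => E s f0 /\ E s t /\ E s bt)); auto. intro y.
    rewrite <- gu, <- gv, <- gz, <- !(aut_arc E g); auto. tauto. }
  assert (dpos : 0 < d).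
  { apply (card_pos _ _ t2 Hd). split; apply arcH; reflexivity. }
  set (Np := map phi allH).
  assert (NpN : NoDup Np).
  { apply NoDup_map_NoDup_ForallPairs. intros a b _ _; apply (lab_inj E x phi); auto. apply allH_nodup. }
  assert (NpI : forall y, In y Np <-> E x y).
  { intro y. unfold Np. rewrite in_map_iff. split.
    - intros [a [<- _]]. apply (lab_in E x phi); auto.
    - intro H. destruct (lab_out E x phi y Lx H) as [a <-]. exists a; split; auto; apply allH_in. }
  assert (NpL : length Np = 8) by reflexivity.
  destruct (fin_adj x (fun y => E y x)) as [dm [Nm [NmN [NmI NmL]]]]. { intros y H; right; auto. }
  assert (C1 : length Nm * d = length Np * d).
  { apply double_count_const with (R := fun u z => E z u).
    - intros u Hu. apply NmI in Hu. eapply card_unique. apply count_card; auto.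
      eapply card_ext. apply (dall u x Hu). intro z. unfold Dt. rewrite NpI. tauto.
    - intros z Hz. apply NpI in Hz. eapply card_unique. apply count_card; auto.
      eapply card_ext. apply (dall x z Hz). intro u. unfold Dt. rewrite NmI. tauto. }
  assert (NmL8 : length Nm = 8).
  { rewrite NpL in C1. apply Nat.mul_cancel_r in C1; lia. }
  assert (C2 : length Nm * 3 = length Np * cs).
  { apply double_count_const with (R := fun u z => E u z).
    - intros u Hu. apply NmI in Hu. eapply card_unique. apply count_card; auto.
      eapply card_ext. apply (acard u x Hu). intro z. rewrite NpI. tauto.
    - intros z Hz. apply NpI in Hz. eapply card_unique. apply count_card; auto.
      eapply card_ext. apply (sall x z Hz). intro u. rewrite NmI. tauto. }
  assert (cs3 : cs = 3) by lia.
  assert (r1 : 1 <= r).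
  { apply (card_pos _ _ x Hr). split; [|split]; apply (lab_in E x phi); auto. }
  assert (r2 : r < 3).
  { rewrite <- cs3. apply (card_lt _ _ cs r t1 Hcs Hr).
    - intros y [A [B _]]. split; auto.
    - split; apply arcH; reflexivity.
    - intros [_ [_ K]]. revert K. apply narcH. reflexivity. }
  set (c := 8 - 3 - d).
  assert (C3 : forall u, In u Nm -> count Np (fun z => ~ adj E u z) = c).
  { intros u Hu. apply NmI in Hu.
    assert (K1 : count Np (fun z => E u z) = 3).
    { eapply card_unique. apply count_card; auto. eapply card_ext. apply (acard u x Hu). intro z. rewrite NpI. tauto. }
    assert (K2 : count Np (fun z => E z u) = d).
    { eapply card_unique. apply count_card; auto. eapply card_ext. apply (dall u x Hu). intro z. unfold Dt. rewrite NpI. tauto. }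
    assert (K := count_part3 Np (fun z => E u z) (fun z => E z u) (fun z => ~ adj E u z)).
    rewrite K1, K2, NpL in K. unfold c. rewrite <- K. lia.
    - intros y _. unfold adj. tauto.
    - intros y A B. exact (asym E dig _ _ A B).
    - intros y A B. apply B. left; auto.
    - intros y A B. apply B. right; auto. }
  set (lb := filter (fun pr => dec (~ adj E (fst pr) (snd pr))) (list_prod Nm Np)).
  assert (lbL : length lb = length Nm * c).
  { apply (count_prod Nm Np (fun u z => ~ adj E u z) c C3). }
  assert (lbI : forall pr, In pr lb <-> E (fst pr) x /\ E x (snd pr) /\ ~ adj E (fst pr) (snd pr)).
  { intros [u z]. unfold lb. rewrite filter_In, in_prod_iff, dec_spec, NmI, NpI. simpl. tauto. }
  assert (lbN : NoDup lb) by (apply NoDup_filter, NoDup_list_prod; auto).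
  assert (C4 : length Nm * 3 = length lb * r).
  { apply double_count_const with (R := fun s pr => E s (fst pr) /\ E s (snd pr)).
    - intros s Hs. apply NmI in Hs. eapply card_unique. apply count_card; auto.
      destruct (lab_all E dig CH x phi Lx s) as [psi L].
      destruct (lab_out E s psi x L Hs) as [p Hp].
      apply (card_map (fun ac => In ac (pairs2 p)) _ (fun ac => (psi (fst ac), psi (snd ac))) 3).
      + rewrite <- (pairs2_len p). apply card_list. apply pairs2_nodup. tauto.
      + intros [a1 a2] [b1 b2] H. simpl in H. inversion H.
        f_equal; eapply (lab_inj E s psi); eauto.
      + intros [y1 y2]. rewrite lbI. simpl. split.
        * intros [[A [B C]] [D F]].
          destruct (lab_out E s psi y1 L D) as [a1 <-]. destruct (lab_out E s psi y2 L F) as [a2 <-].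
          exists (a1, a2). split; auto. apply pairs2_spec. subst x.
          rewrite (lab_arc E s psi) in A, B; auto. split; auto. split; auto.
          split; [destruct (Hb a1 a2) eqn:Q; auto; exfalso; apply C; left; apply (lab_arc E s psi); auto
                 |destruct (Hb a2 a1) eqn:Q; auto; exfalso; apply C; right; apply (lab_arc E s psi); auto].
        * intros [[a1 a2] [Hin Heq]]. inversion Heq; subst y1 y2. apply pairs2_spec in Hin.
          destruct Hin as [A [B [C D]]]. subst x.
          split; [split; [|split]|split]; try (apply (lab_arc E s psi); auto); try (apply (lab_in E s psi); auto).
          intros [K|K]; apply (lab_arc E s psi) in K; auto; congruence.
    - intros [u z] Hp. apply lbI in Hp. simpl in Hp. destruct Hp as [A [B C]].
      eapply card_unique. apply count_card; auto. simpl.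
      eapply card_ext. apply (rall u x z A B); intro K; apply C; [left|right]; auto.
      intro s. rewrite NmI. tauto. }
  rewrite NmL8, lbL, NmL8 in C4.
  assert (r = 1 \/ r = 2) as [Hr1|Hr2] by lia; subst r.
  - assert (c = 3) by lia. unfold c in *.
    intros u v A. specialize (dall u v A). replace d with 2 in dall by lia. auto.
  - exfalso. lia.
Qed.

End Count.


Lemma HA_lab {V} (E : V -> V -> Prop) x phi : Lab E x phi -> forall p c0 c1 c2, out3 p = (c0,c1,c2) ->
  Hb c0 c1 = true /\ Hb c1 c2 = true /\ Hb c2 c0 = true /\ Hb p c0 = true /\ Hb p c1 = true /\ Hb p c2 = true /\
  forall y, (E x y /\ E (phi p) y) <-> (y = phi c0 \/ y = phi c1 \/ y = phi c2).
Proof.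
  intros L p c0 c1 c2 Hp. destruct (HF1 p) as [d0 [d1 [d2 [Q [A [B [C K]]]]]]].
  rewrite Hp in Q. inversion Q; subst d0 d1 d2.
  split; auto. split; auto. split; auto.
  split; [apply K; auto|]. split; [apply K; auto|]. split; [apply K; auto|].
  intro y. split.
  - intros [Y1 Y2]. destruct (lab_out E x phi y L Y1) as [q <-].
    apply (lab_arc E x phi) in Y2; auto. apply K in Y2. intuition congruence.
  - intro H. split.
    + destruct H as [ -> | [ -> | -> ] ]; apply (lab_in E x phi); auto.
    + destruct H as [ -> | [ -> | -> ] ]; apply (lab_arc E x phi); auto; apply K; auto.
Qed.

Theorem main_out {V} (E : V -> V -> Prop) : is_digraph E -> locally_finite E -> C_homogeneous E ->
  forall x, ~ induced_isomorphic E (out_nbhd E x) H_arc.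
Proof.
  intros dig LF CH x [phi [I [R A]]].
  assert (Lx : Lab E x phi) by (split; [|split]; auto).
  pose proof (main_count E dig LF CH x phi Lx) as d2.
  assert (arcH : forall a b, Hb a b = true -> E (phi a) (phi b)) by (intros; apply (lab_arc E x phi); auto).
  assert (inH : forall a, E x (phi a)) by (intros; apply (lab_in E x phi); auto).
  destruct (lab_all E dig CH x phi Lx (phi Htop)) as [psit Lt].
  destruct (HA_lab E x phi Lx Htop _ _ _ eq_refl) as [F01 [F12 [F20 [T0 [T1 [T2 HAt]]]]]].
  destruct (TopBot E (phi Htop) psit (phi (Hpt false z0)) (phi (Hpt false z1)) (phi (Hpt false z2)) Lt)
    as [w [bb TBt]]; try (apply arcH; reflexivity).
  destruct (DT E dig CH d2 x (phi Htop) _ _ _ w bb (inH Htop) HAt (arcH _ _ F01) (arcH _ _ F12) (arcH _ _ F20) TBt)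
    as [Bx _].
  destruct TBt as [_ [_ [_ [_ [_ [Tb [_ [_ [_ [_ [Fb0 [Fb1 [Fb2 _]]]]]]]]]]]]].
  assert (key : forall s q, Hb (Hpt false s) q = true -> E (phi q) bb).
  { intros s q Hq.
    destruct (out3 (Hpt false s)) as [[c0 c1] c2] eqn:Ho.
    destruct (HA_lab E x phi Lx _ _ _ _ Ho) as [C01 [C12 [C20 [P0 [P1 [P2 HAp]]]]]].
    destruct (lab_all E dig CH x phi Lx (phi (Hpt false s))) as [psip Lp].
    destruct (TopBot E (phi (Hpt false s)) psip (phi c0) (phi c1) (phi c2) Lp) as [w' [bb' TBp]];
      try (apply arcH; auto).
    destruct (DT E dig CH d2 x (phi (Hpt false s)) _ _ _ w' bb' (inH _) HAp (arcH _ _ C01) (arcH _ _ C12) (arcH _ _ C20) TBp)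
      as [_ Sub].
    destruct TBp as [_ [W0 [_ [_ [_ [_ [_ [_ [_ [_ [B0 [B1 [B2 _]]]]]]]]]]]]].
    assert (Pb : E (phi (Hpt false s)) bb) by (destruct s; auto).
    assert (Q0 : E (phi c0) bb) by (destruct s; simpl in Ho; inversion Ho; subst; auto).
    destruct (Sub bb Pb Bx) as [ -> | -> ].
    - exfalso. exact (asym E dig _ _ W0 Q0).
    - assert (Hq' : q = c0 \/ q = c1 \/ q = c2).
      { destruct (HF1 (Hpt false s)) as [d0 [d1 [d2' [Q [_ [_ [_ K]]]]]]]. rewrite Ho in Q. inversion Q; subst.
        apply K; auto. }
      destruct Hq' as [->|[ -> | -> ]]; auto. }
  assert (all : forall q, E (phi q) bb).
  { intros [| |[] []].
    - auto.
    - apply (key z0). reflexivity.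
    - apply (key z1). reflexivity.
    - apply (key z2). reflexivity.
    - apply (key z0). reflexivity.
    - auto.
    - auto.
    - auto. }
  destruct (lab_all E dig CH x phi Lx bb) as [psib Lb].
  destruct (lab_out E bb psib x Lb Bx) as [p0 Hp0].
  destruct (HF1 p0) as [c0 [c1 [c2 [_ [_ [_ [_ K]]]]]]].
  assert (E x (psib c0)) as X1 by (rewrite <- Hp0; apply (lab_arc E bb psib); auto; apply K; auto).
  assert (E bb (psib c0)) as X2 by (apply (lab_in E bb psib); auto).
  destruct (lab_out E x phi _ Lx X1) as [q Hq]. rewrite <- Hq in X2.
  exact (asym E dig _ _ X2 (all q)).
Qed.


Lemma crt_mono {V} (R1 R2 : V -> V -> Prop) a b : (forall u v, R1 u v -> R2 u v) ->
  clos_refl_trans V R1 a b -> clos_refl_trans V R2 a b.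
Proof. intros H C. induction C. apply rt_step; auto. apply rt_refl. eapply rt_trans; eauto. Qed.

Section Rev.
Context {V : Type} (E : V -> V -> Prop).
Let Er := fun a b => E b a.

Lemma rev_dig : is_digraph E -> is_digraph Er.
Proof. intros [I A]. split; unfold Er; auto. Qed.
Lemma rev_adj a b : adj Er a b <-> adj E a b.
Proof. unfold adj, Er. tauto. Qed.
Lemma rev_lf : locally_finite E -> locally_finite Er.
Proof. intros L x. destruct (L x) as [l H]. exists l. intros y Hy. apply H, rev_adj, Hy. Qed.
Lemma rev_conn A : connected_on Er A -> connected_on E A.
Proof. intros C a b Ha Hb. apply crt_mono with (2 := C a b Ha Hb). intros u v [? [? K]]. repeat split; auto. apply rev_adj; auto. Qed.
Lemma rev_ch : C_homogeneous E -> C_homogeneous Er.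
Proof.
  intros CH A B f FA CA FB CB [I1 [I2 [I3 I4]]].
  destruct (CH A B f FA (rev_conn A CA) FB (rev_conn B CB)) as [g [[Hinv Ha] Hg]].
  - split; auto. split; auto. split; auto. intros a b Ha Hb. specialize (I4 b a Hb Ha). unfold Er in I4. exact I4.
  - exists g. split; auto. split; auto. intros a b. unfold Er. apply Ha.
Qed.
Lemma rev_in x : induced_isomorphic E (in_nbhd E x) H_arc -> induced_isomorphic Er (out_nbhd Er x) H_arc.
Proof.
  intros [phi [I [R A]]]. exists (fun a => phi (Hrev a)). split; [|split].
  - intros a b H. apply I in H. rewrite <- (Hrev_inv a), <- (Hrev_inv b), H. reflexivity.
  - intro v. unfold out_nbhd, Er. change (E v x) with (in_nbhd E x v). rewrite (R v). split.
    + intros [t Ht]. exists (Hrev t). rewrite Hrev_inv; auto.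
    + intros [a Ha]. eauto.
  - intros a b. unfold Er. rewrite <- A, <- !Hb_spec, HFrev. reflexivity.
Qed.
End Rev.

Theorem lemma3p1 (V : Type) (E : V -> V -> Prop) :
  is_digraph E -> connected E -> locally_finite E -> C_homogeneous E ->
  forall x : V,
    ~ induced_isomorphic E (out_nbhd E x) H_arc /\
    ~ induced_isomorphic E (in_nbhd E x) H_arc.
Proof.
  intros dig _ LF CH x. split.
  - apply main_out; auto.
  - intro H. apply (main_out (fun a b => E b a) (rev_dig E dig) (rev_lf E LF) (rev_ch E CH) x).
    apply rev_in; auto.
Qed.
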